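(* If $G$ is a graph with minimum degree $\delta(G)\ge 2$ and $\beta_0(G)=\Gamma(G)$, then $\beta_0(G)=\Gamma(G)=\Gamma_{\rm cer}(G)$.
   Context: All graphs are finite and simple; $\delta(G)$ is the minimum degree and $\beta_0(G)$ is the maximum cardinality of an independent set of vertices of $G$. A set $D\subseteq V_G$ is a dominating set of $G$ if every vertex of $V_G-D$ has a neighbor in $D$; $\Gamma(G)$ is the maximum cardinality of a minimal (with respect to inclusion) dominating set. A set $D$ is a certified dominating set of $G$ if $D$ is dominating and every vertex of $D$ has either zero or at least two neighbors in $V_G-D$; $\Gamma_{\rm cer}(G)$ is the maximum cardinality of a minimal (with respect to inclusion) certified dominating set. *)

(* Defs.v *)
From mathcomp Require Import all_boot.
Set Implicit Arguments. Unset Strict Implicit. Unset Printing Implicit Defensive.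

Section Graph.
Variables (T : finType) (e : rel T).

Definition simple_graph : Prop := symmetric e /\ irreflexive e.

Definition nbhd (v : T) : {set T} := [set u | e v u].

Definition deg (v : T) : nat := #|nbhd v|.

Definition min_degree_ge (k : nat) : Prop := forall v : T, k <= deg v.

Definition independent (S : {set T}) : bool :=
  [forall u in S, forall v in S, ~~ e u v].

Definition dominating (D : {set T}) : bool :=
  [forall v in ~: D, exists u in D, e v u].

Definition certified (D : {set T}) : bool :=
  dominating D &&
  [forall v in D, (#|nbhd v :&: ~: D| == 0) || (2 <= #|nbhd v :&: ~: D|)].

Definition beta0 : nat := \max_(S : {set T} | independent S) #|S|.

Definition upper_dom : nat := \max_(D : {set T} | minset dominating D) #|D|.

Definition upper_cer_dom : nat := \max_(D : {set T} | minset certified D) #|D|.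

End Graph.

(* Main.v *)
Require Import Defs.
From mathcomp Require Import all_boot zify.
Set Implicit Arguments. Unset Strict Implicit.

Lemma domP (T : finType) (e : rel T) (S : {set T}) :
  reflect (forall w, w \notin S -> exists2 u, u \in S & e w u) (dominating e S).
Proof.
apply: (iffP forallP) => H.
- move=> w wS; have := H w; rewrite inE wS /= => /existsP[u /andP[uS ewu]].
  by exists u.
- move=> w; apply/implyP; rewrite inE => wS; have [u uS ewu] := H w wS.
  by apply/existsP; exists u; rewrite uS.
Qed.

Lemma cerP (T : finType) (e : rel T) (S : {set T}) :
  reflect (dominating e S /\ forall v, v \in S ->
     #|nbhd e v :&: ~: S| = 0 \/ 2 <= #|nbhd e v :&: ~: S|) (certified e S).
Proof.
apply: (iffP andP) => [[H1 /forallP H2]|[H1 H2]]; split => //.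
- move=> v vS; have := H2 v; rewrite vS /= => /orP[/eqP|]; by [left|right].
- apply/forallP => v; apply/implyP => vS.
  by case: (H2 v vS) => [->|->] //; rewrite orbT.
Qed.

Lemma indP (T : finType) (e : rel T) (S : {set T}) :
  reflect (forall u v, u \in S -> v \in S -> ~~ e u v) (independent e S).
Proof.
apply: (iffP forallP) => H.
- move=> u v uS vS; have := H u; rewrite uS /= => /forallP/(_ v).
  by rewrite vS.
- move=> u; apply/implyP => uS; apply/forallP => v; apply/implyP => vS.
  exact: H.
Qed.

Lemma indep_mincer (T : finType) (e : rel T) (I : {set T}) :
  simple_graph e -> min_degree_ge e 2 -> independent e I ->
  (forall S, independent e S -> #|S| <= #|I|) -> minset (certified e) I.
Proof.
move=> [sym irr] deg2 /indP indI maxI.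
have domI : dominating e I.
  apply/domP => w wI; case: (boolP [exists u in I, e w u]).
    by move=> /existsP[u /andP[uI ewu]]; exists u.
  rewrite negb_exists => /forallP Hw.
  have : independent e (w |: I).
    apply/indP => u v; rewrite !in_setU1 => /orP[/eqP->|uI] /orP[/eqP->|vI].
    + by rewrite irr.
    + by have := Hw v; rewrite vI.
    + by have := Hw u; rewrite uI /= sym.
    + exact: indI.
  by move/maxI; rewrite cardsU1 wI add1n ltnn.
apply/minsetP; split.
  apply/cerP; split => // v vI; right.
  have -> : nbhd e v :&: ~: I = nbhd e v.
    apply/setIidPl/subsetP => u; rewrite inE => evu; rewrite inE.
    by apply/negP => uI; have := indI v u vI uI; rewrite evu.
  exact: deg2.
move=> B /cerP[/domP domB _] BI; apply/eqP; rewrite eqEsubset BI /=.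
apply/subsetP => v vI; apply/negPn/negP => vB.
have [u uB evu] := domB v vB.
by have := indI v u vI (subsetP BI u uB); rewrite evu.
Qed.

Lemma other_nbr (T : finType) (e : rel T) v a :
  2 <= deg e v -> exists2 u, e v u & u != a.
Proof.
move=> d2; case: (boolP [exists u, e v u && (u != a)]).
  by move=> /existsP[u /andP[]]; exists u.
rewrite negb_exists => /forallP H.
have : nbhd e v \subset [set a].
  apply/subsetP => u; rewrite !inE => evu; have := H u; rewrite evu /=.
  by move/negPn.
move/subset_leq_card; rewrite cards1 => h.
by move: d2; rewrite /deg; lia.
Qed.

Lemma ndomP (T : finType) (e : rel T) (S : {set T}) :
  ~~ dominating e S -> exists w, w \notin S /\ forall u, u \in S -> ~~ e w u.
Proof.
rewrite negb_forall => /existsP[w]; rewrite negb_imply inE => /andP[wS].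
rewrite negb_exists => /forallP H; exists w; split => // u uS.
by have := H u; rewrite uS.
Qed.

Lemma ar1 a t : a <= t -> 1 * t.+1 + (t.+1 - a) <= 0 * t.+1 + (t.+1 - 0) -> False.
Proof. lia. Qed.
Lemma ar2 n a b t : b <= t -> a <= t -> t.+1 + n + (t.+1 - b) <= n + (t.+1 - a) -> False.
Proof. lia. Qed.
Lemma ar3 n a b t : b < a -> a <= t -> n + (t.+1 - b) <= n + (t.+1 - a) -> False.
Proof. lia. Qed.

Lemma D0_empty (T : finType) (e : rel T) (D : {set T}) :
  simple_graph e -> min_degree_ge e 2 -> minset (certified e) D ->
  forall x, x \in D -> ~~ (nbhd e x \subset D).
Proof.
move=> [sym irr] deg2 /minsetP[certD minD] x xD; apply/negP => xD0.
set D0 := [set v in D | nbhd e v \subset D].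
have inD0 v : v \in D0 -> forall u, e v u -> u \in D.
  by rewrite inE => /andP[_ /subsetP H] u evu; apply: H; rewrite inE.
have D0D v : v \in D0 -> v \in D by rewrite inE => /andP[].
move: (certD) => /cerP[/domP domD certD'].
pose valid (Y : {set T}) := (Y \subset D0) && dominating e (D :\: Y).
pose c (Y : {set T}) := #|[set v in Y | [exists u in Y, e v u]]|.
pose K := #|T|.+1.
pose f (Y : {set T}) := #|Y| * K + (K - c Y).
have cle Y : c Y <= #|T| by apply: max_card.
have xD0' : x \in D0 by rewrite inE xD.
have validx : valid [set x].
  rewrite /valid sub1set xD0' /=; apply/domP => w.
  rewrite !inE negb_and negbK => /orP[/eqP->|wD].
    have [u exu _] := other_nbr x (deg2 x).
    exists u => //; rewrite !inE (inD0 x xD0' u exu) andbT.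
    by apply/negP => /eqP ux; move: exu; rewrite ux irr.
  have [u uD ewu] := domD w wD; exists u => //; rewrite !inE uD andbT.
  apply/negP => /eqP ux; move: ux ewu => ->; rewrite sym => /(inD0 x xD0').
  by rewrite (negbTE wD).
case: (arg_maxnP f validx) => Y /andP[YD0 /domP domY] maxY.
have YD v : v \in Y -> v \in D by move=> /(subsetP YD0)/D0D.
have [y0 y0Y] : exists y, y \in Y.
  case: (set_0Vmem Y) => [Y0|[v vY]]; last by exists v.
  have := maxY _ validx.
  rewrite /f Y0 cards1 cards0.
  have -> : c set0 = 0 by apply/eqP; rewrite cards_eq0; apply/eqP/setP => v; rewrite !inE.
  have := cle [set x]; rewrite /K /=; move: (c [set x]) (#|T|) => a t; move=> h1 h2; exfalso; exact: ar1 h1 h2.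
suff certDY : certified e (D :\: Y).
  move: (minD _ certDY (subsetDl D Y)) => /setP/(_ y0).
  by rewrite !inE y0Y (YD _ y0Y).
apply/cerP; split; first by apply/domP.
move=> z; rewrite inE => /andP[zY zD].
case: (boolP (z \in D0)) => zD0; last first.
  right; have : nbhd e z :&: ~: D != set0.
    apply/set0Pn; move: zD0; rewrite inE zD /= => /subsetPn[u]; rewrite inE => ezu uD.
    by exists u; rewrite !inE ezu uD.
  rewrite -card_gt0 => h; case: (certD' z zD) => h2; first by move: h; rewrite h2.
  apply: leq_trans h2 _; apply: subset_leq_card; apply/setIS/subsetP => u.
  by rewrite !inE negb_and => ->; rewrite orbT.
case Pc : #|nbhd e z :&: ~: (D :\: Y)| => [|[|n]]; [by left| |by right].
exfalso; move/eqP: Pc => /cards1P[y Py].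
have hy u : e z u -> (u \in Y) = (u == y).
  move=> ezu; move/setP/(_ u): (Py); rewrite !inE ezu (inD0 z zD0 u ezu) /= andbT.
  by rewrite negbK => ->.
have ezy : e z y.
  by move/setP/(_ y): (Py); rewrite !inE eqxx => /andP[].
have yY : y \in Y by rewrite hy // eqxx.
have validzY : (z |: Y) \subset D0 by rewrite subUset sub1set zD0 YD0.
have ndom : ~~ dominating e (D :\: (z |: Y)).
  apply/negP => dzY.
  have := maxY (z |: Y); rewrite /valid validzY dzY => /(_ isT).
  rewrite /f cardsU1 zY add1n mulSn.
  have := cle Y; have := cle (z |: Y); rewrite /K /=.
  move: (#|Y| * #|T|.+1) => n; move: (c Y) (c (z |: Y)) (#|T|) => a b t; exact: ar2.
have [w [wn Hw]] := ndomP ndom.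
have wy : w = y.
  case: (boolP (w == z)) => [/eqP wz|wz].
    have [u ezu uy] := other_nbr y (deg2 z).
    have := Hw u; rewrite wz ezu => H; exfalso; move: H.
    suff -> : u \in D :\: (z |: Y) by move=> /(_ isT).
    rewrite !inE (inD0 z zD0 u ezu) andbT negb_or hy // uy andbT.
    by apply/negP => /eqP uz; move: ezu; rewrite uz irr.
  have wDY : w \notin D :\: Y.
    by apply/negP => h; move: wn; rewrite !inE negb_or wz /=; move: h; rewrite inE => ->.
  have [u uDY ewu] := domY w wDY.
  case: (boolP (u == z)) => [/eqP uz|uz]; last first.
    have := Hw u; rewrite ewu => H; exfalso; move: H.
    suff -> : u \in D :\: (z |: Y) by move=> /(_ isT).
    by move: uDY; rewrite !inE negb_or uz.
  move: ewu; rewrite uz sym => ezw; apply/eqP; rewrite -hy //.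
  move: wDY; rewrite inE negb_and negbK (inD0 z zD0 w ezw) orbF.
  by [].
have Hy u : u \in D -> u != z -> u \notin Y -> ~~ e y u.
  by move=> uD uz uY; rewrite -wy; apply: Hw; rewrite !inE negb_or uz uY uD.
pose Y2 := z |: (Y :\ y).
have yz : y != z by apply/negP => /eqP yz; move: ezy; rewrite yz irr.
have valid2 : valid Y2.
  apply/andP; split.
    by rewrite subUset sub1set zD0 /=; apply: subset_trans YD0; apply: subsetDl.
  apply/domP => v; rewrite !inE.
  case: (boolP (v == z)) => [/eqP->|vz] /= Hv.
    by exists y => //; rewrite /Y2 !inE (negbTE yz) eqxx /= (YD _ yY).
  have vDY : v \notin D :\: Y.
    rewrite inE negb_and negbK; move: Hv; rewrite negb_and negbK.
    by case/orP => [/andP[_ ->]|->] //; rewrite orbT.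
  have [u uDY evu] := domY v vDY.
  case: (boolP (u == z)) => [/eqP uz|uz].
    exfalso; move: evu; rewrite uz sym => ezv.
    have vY : v \in Y by move: vDY; rewrite inE negb_and negbK (inD0 z zD0 v ezv) orbF.
    have /eqP vy : v == y by rewrite -hy.
    by move: Hv; rewrite vy eqxx /= (YD _ yY).
  exists u => //; move: uDY; rewrite /Y2 !inE => /andP[uY ->].
  by rewrite (negbTE uz) (negbTE uY) andbF.
have := maxY _ valid2.
have cardY2 : #|Y2| = #|Y|.
  rewrite cardsU1 (cardsD1 y Y) yY inE negb_and zY orbT add1n /=.
  by [].
have cY2 : c Y2 < c Y.
  apply: proper_card; apply/properP; split.
    apply/subsetP => v; rewrite !inE => /andP[vY2 /existsP[u /andP[uY2 evu]]].
    move: vY2 uY2; rewrite /Y2 !inE.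
    case: (boolP (v == z)) => [/eqP vz|vz] /=.
      move=> _ /orP[/eqP uz|/andP[uy uY]]; first by move: evu; rewrite vz uz irr.
      by move: evu; rewrite vz => /(hy u); rewrite uY (negbTE uy).
    move=> /andP[vy vY] /orP[/eqP uz|/andP[uy uY]].
      by move: evu; rewrite uz sym => /(hy v); rewrite vY (negbTE vy).
    by rewrite vY; apply/existsP; exists u; rewrite uY.
  exists y; last first.
    by rewrite !inE eqxx (negbTE yz).
  rewrite inE yY /=.
  have [u eyu uz] := other_nbr z (deg2 y).
  apply/existsP; exists u; rewrite eyu andbT.
  apply/negPn/negP => uY; move: (Hy u (inD0 y (subsetP YD0 y yY) u eyu) uz uY).
  by rewrite eyu.
rewrite /f cardY2; have := cle Y; rewrite /K.
rewrite /K /=; move: cY2; move: (#|Y| * #|T|.+1) => n; move: (c Y) (c Y2) (#|T|) => a b t; exact: ar3.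
Qed.

Lemma mincer_mindom (T : finType) (e : rel T) (D : {set T}) :
  simple_graph e -> min_degree_ge e 2 -> minset (certified e) D ->
  minset (dominating e) D.
Proof.
move=> sg deg2 mD; have D0e := D0_empty sg deg2 mD.
move: mD => /minsetP[certD minD]; move: (certD) => /cerP[domD certD'].
apply/minsetP; split => // B /domP domB BD.
apply/eqP; rewrite eqEsubset BD /=; apply/subsetP => v vD.
apply/negPn/negP => vB.
have BD' : B \subset D :\ v.
  apply/subsetP => u uB; rewrite !inE (subsetP BD u uB) andbT.
  by apply/negP => /eqP uv; move: vB; rewrite -uv uB.
have cD' : certified e (D :\ v).
  apply/cerP; split.
    apply/domP => w wD'.
    have wB : w \notin B by apply/negP => /(subsetP BD'); rewrite (negbTE wD').
    have [u uB ewu] := domB w wB; exists u => //; exact: (subsetP BD').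
  move=> z; rewrite !inE => /andP[zv zD]; right.
  have : nbhd e z :&: ~: D != set0.
    apply/set0Pn; have := D0e z zD => /subsetPn[u]; rewrite inE => ezu uD.
    by exists u; rewrite !inE ezu uD.
  rewrite -card_gt0 => h; case: (certD' z zD) => h2; first by move: h; rewrite h2.
  apply: leq_trans h2 _; apply: subset_leq_card; apply/setIS/subsetP => u.
  by rewrite !inE negb_and => ->; rewrite orbT.
have := minD _ cD' (subsetDl D [set v]) => /setP/(_ v).
by rewrite !inE eqxx vD.
Qed.

Unset Implicit Arguments.
Theorem corollary3p6 (T : finType) (e : rel T) :
  simple_graph e ->
  min_degree_ge e 2 ->
  beta0 e = upper_dom e ->
  beta0 e = upper_dom e /\ upper_dom e = upper_cer_dom e.
Proof.
move=> sg deg2 H; split => //.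
apply/eqP; rewrite eqn_leq; apply/andP; split.
  rewrite -H.
  have ind0 : independent e set0 by apply/indP => u v; rewrite inE.
  case: (arg_maxnP (fun S : {set T} => #|S|) ind0) => I indI maxI.
  apply: (@leq_trans #|I|).
    by apply/bigmax_leqP => S HS; apply: (maxI S HS).
  apply: leq_bigmax_cond; apply: (indep_mincer sg deg2 indI) => S indS.
  exact: (maxI S indS).
apply/bigmax_leqP => D /(mincer_mindom sg deg2) HD.
exact: leq_bigmax_cond.
Qed.
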